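(* Let $a\neq 0$ be a constant and let $\phi(x,t)$ be a smooth function with $\phi_x\neq0$ satisfying the Schwarz–KdV equation $\frac{\phi_t}{\phi_x}+a\{\phi;x\}=0$. Then $u=a\{\phi;x\}$ solves the KdV equation $u_t+au_{xxx}+3uu_x=0$, and for any constants $A,B$ not both zero, on a region where $A\phi+B\neq0$, the function $$\widetilde u=a\{\phi;x\}+4a\Big(\log\frac{A\phi+B}{\sqrt{\phi_x}}\Big)_{xx}$$ also solves the KdV equation $\widetilde u_t+a\widetilde u_{xxx}+3\widetilde u\widetilde u_x=0$.
   Context: The Schwarzian derivative of a function $\phi(x,t)$ with $\phi_x\neq0$ is $\{\phi;x\}=\frac{\phi_{xxx}}{\phi_x}-\frac32\frac{\phi_{xx}^2}{\phi_x^2}$. All functions are smooth. *)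

(* Defs.v *)
From Stdlib Require Import Reals.
From Coquelicot Require Import Coquelicot.
Open Scope R_scope.

Definition dx (f : R -> R -> R) : R -> R -> R :=
  fun x t => Derive (fun y => f y t) x.
Definition dt (f : R -> R -> R) : R -> R -> R :=
  fun x t => Derive (fun s => f x s) t.

Fixpoint Ck (n : nat) (f : R -> R -> R) : Prop :=
  match n with
  | O => forall x t, continuous (fun p : R * R => f (fst p) (snd p)) (x, t)
  | S n' =>
      (forall x t, continuous (fun p : R * R => f (fst p) (snd p)) (x, t)) /\
      (forall x t, ex_derive (fun y => f y t) x /\ ex_derive (fun s => f x s) t) /\
      Ck n' (dx f) /\ Ck n' (dt f)
  end.

Definition smooth2 (f : R -> R -> R) : Prop := forall n, Ck n f.

Definition schwarzian (phi : R -> R -> R) : R -> R -> R :=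
  fun x t => dx (dx (dx phi)) x t / dx phi x t
             - 3 / 2 * (dx (dx phi) x t / dx phi x t) ^ 2.

Definition open2 (U : R -> R -> Prop) : Prop :=
  forall x t, U x t -> exists eps : R, 0 < eps /\
    forall y s, Rabs (y - x) < eps -> Rabs (s - t) < eps -> U y s.

Definition KdV_at (a : R) (u : R -> R -> R) (x t : R) : Prop :=
  dt u x t + a * dx (dx (dx u)) x t + 3 * u x t * dx u x t = 0.

(* log((A phi + B)/sqrt(phi_x)), taken with absolute values so it is defined
   for either sign of A phi + B and of phi_x; its x-derivatives coincide with
   those of any local branch of the logarithm. *)
Definition logterm (A B : R) (phi : R -> R -> R) : R -> R -> R :=
  fun x t => ln (Rabs (A * phi x t + B)) - / 2 * ln (Rabs (dx phi x t)).

Definition utilde (a A B : R) (phi : R -> R -> R) : R -> R -> R :=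
  fun x t => a * schwarzian phi x t + 4 * a * dx (dx (logterm A B phi)) x t.

(* Main.v *)
Require Import Defs.
From Stdlib Require Import Reals Lra.
From Coquelicot Require Import Coquelicot.
Open Scope R_scope.

Lemma isd_eq (f : R -> R) (x l l' : R) : is_derive f x l -> l = l' -> is_derive f x l'.
Proof. intros H ->; exact H. Qed.
Lemma isd_mult (f g : R -> R) (x df dg : R) : is_derive f x df -> is_derive g x dg ->
  is_derive (fun y => f y * g y) x (df * g x + f x * dg).
Proof. intros; apply (is_derive_mult f g); auto; intros; apply Rmult_comm. Qed.
Lemma isd_plus (f g : R -> R) (x df dg : R) : is_derive f x df -> is_derive g x dg ->
  is_derive (fun y => f y + g y) x (df + dg).
Proof. intros; apply (is_derive_plus f g); auto. Qed.
Lemma isd_const (c x : R) : is_derive (fun _ => c) x 0.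
Proof. apply (is_derive_const c x). Qed.

Lemma smooth_dx f : smooth2 f -> smooth2 (dx f).
Proof. intros H n. destruct (H (S n)) as (_&_&H1&_). exact H1. Qed.
Lemma smooth_dt f : smooth2 f -> smooth2 (dt f).
Proof. intros H n. destruct (H (S n)) as (_&_&_&H1). exact H1. Qed.
Lemma smooth_isdx f x t : smooth2 f -> is_derive (fun y => f y t) x (dx f x t).
Proof. intros H. destruct (H 1%nat) as (_&H1&_). apply Derive_correct. exact (proj1 (H1 x t)). Qed.
Lemma smooth_isdt f x t : smooth2 f -> is_derive (fun s => f x s) t (dt f x t).
Proof. intros H. destruct (H 1%nat) as (_&H1&_). apply Derive_correct. exact (proj2 (H1 x t)). Qed.
Lemma smooth_cont f x t : smooth2 f -> continuity_2d_pt f x t.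
Proof. intros H. apply continuity_2d_pt_filterlim. exact (H O x t). Qed.

Lemma mixed f x t : smooth2 f -> dt (dx f) x t = dx (dt f) x t.
Proof.
  intros H. symmetry. unfold dx, dt.
  apply (Schwarz f x t).
  - exists (mkposreal 1 Rlt_0_1). intros u v _ _.
    destruct (H 1%nat) as (_&H1&_).
    destruct (smooth_dt f H 1%nat) as (_&H2&_).
    destruct (smooth_dx f H 1%nat) as (_&H3&_).
    destruct (H1 u v) as [A1 A2].
    split; [exact A1|split; [exact A2|split]].
    + exact (proj1 (H2 u v)).
    + exact (proj2 (H3 u v)).
  - exact (smooth_cont (dx (dt f)) x t (smooth_dx _ (smooth_dt f H))).
  - exact (smooth_cont (dt (dx f)) x t (smooth_dt _ (smooth_dx f H))).
Qed.

Inductive pe := V (n:nat) | Zv | C (r:R) | Add (a b:pe) | Mul (a b:pe).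
Fixpoint ev (y : nat -> R) (z:R) e := match e with
 | V n => y n | Zv => z | C r => r | Add a b => ev y z a + ev y z b | Mul a b => ev y z a * ev y z b end.
Fixpoint der (dv : nat -> pe) (zd : pe) e := match e with
 | V n => dv n | Zv => zd | C _ => C 0 | Add a b => Add (der dv zd a) (der dv zd b)
 | Mul a b => Add (Mul (der dv zd a) b) (Mul a (der dv zd b)) end.
Definition dvx n := Add (V (S n)) (Mul (C (-1)) (Mul (V n) (V 2))).
Definition zdx := Add (Mul Zv (V 2)) (Mul (C (-1)) (Mul Zv Zv)).
Definition derx zd := der dvx zd.
Definition eS := Add (V 3) (Mul (C (-3/2)) (Mul (V 2) (V 2))).
Fixpoint Q (a : R) n := match n with O => Mul (C (-a)) eS | S k => Add (Mul (V 2) (Q a k)) (derx (C 0) (Q a k)) end.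
Definition dvt a n := Add (Q a n) (Mul (C (-1)) (Mul (V n) (Q a 1))).
Definition zdt a := Add (Mul Zv (Q a 1)) (Mul (C (-1)) (Mul (Mul Zv Zv) (Q a 0))).
Definition eu a := Mul (C a) eS.
Definition eL := Add Zv (Mul (C (-1/2)) (V 2)).
Definition eut a := Add (eu a) (Mul (C (4*a)) (derx zdx eL)).
Definition kdv a zdx' zdt' e y z := ev y z (der (dvt a) zdt' e) + a * ev y z (derx zdx' (derx zdx' (derx zdx' e))) + 3 * ev y z e * ev y z (derx zdx' e).
Lemma alg1 a y z : kdv a (C 0) (C 0) (eu a) y z = 0.
Proof. unfold kdv; simpl; field. Qed.
Lemma alg2 a y z : kdv a zdx (zdt a) (eut a) y z = 0.
Proof. unfold kdv; simpl; field. Qed.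

Fixpoint dn (phi : R -> R -> R) n := match n with O => phi | S k => dx (dn phi k) end.
Definition Yf phi n x t := dn phi n x t / dn phi 1 x t.
Definition evf phi (zf : R -> R -> R) e x t := ev (fun n => Yf phi n x t) (zf x t) e.

Lemma smooth_dn phi n : smooth2 phi -> smooth2 (dn phi n).
Proof. intros H; induction n; simpl; auto using smooth_dx. Qed.

Lemma Y_isdx phi n x t : smooth2 phi -> (forall x t, dx phi x t <> 0) ->
  is_derive (fun y => Yf phi n y t) x (evf phi (fun _ _ => 0) (dvx n) x t).
Proof.
  intros Hs Hd. unfold Yf.
  eapply isd_eq. apply is_derive_div.
  apply smooth_isdx, smooth_dn, Hs. apply smooth_isdx, smooth_dn, Hs. apply Hd.
  unfold evf, Yf; simpl. field. apply Hd.
Qed.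

Lemma ev_isdx phi U zf zd e x t : smooth2 phi -> (forall x t, dx phi x t <> 0) ->
  (forall x t, U x t -> is_derive (fun y => zf y t) x (evf phi zf zd x t)) -> U x t ->
  is_derive (fun y => evf phi zf e y t) x (evf phi zf (derx zd e) x t).
Proof.
  intros Hs Hd Hz HU. induction e; simpl.
  - unfold evf; simpl. eapply isd_eq. apply (Y_isdx phi n x t Hs Hd). reflexivity.
  - unfold evf in *; simpl. apply Hz, HU.
  - unfold evf; simpl. apply isd_const.
  - unfold evf in *; simpl. apply isd_plus; auto.
  - unfold evf in *; simpl. apply isd_mult; auto.
Qed.

Lemma loc_x (U : R -> R -> Prop) x t : open2 U -> U x t -> locally x (fun y => U y t).
Proof.
  intros HO HU. destruct (HO x t HU) as [e [He HP]].
  exists (mkposreal e He). intros y Hy. apply HP.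
  exact Hy. rewrite Rminus_eq_0, Rabs_R0; exact He.
Qed.
Lemma loc_t (U : R -> R -> Prop) x t : open2 U -> U x t -> locally t (fun s => U x s).
Proof.
  intros HO HU. destruct (HO x t HU) as [e [He HP]].
  exists (mkposreal e He). intros y Hy. apply HP.
  rewrite Rminus_eq_0, Rabs_R0; exact He. exact Hy.
Qed.

Lemma dx_on phi U zf zd F e : smooth2 phi -> (forall x t, dx phi x t <> 0) ->
  (forall x t, U x t -> is_derive (fun y => zf y t) x (evf phi zf zd x t)) -> open2 U ->
  (forall x t, U x t -> F x t = evf phi zf e x t) ->
  forall x t, U x t -> dx F x t = evf phi zf (derx zd e) x t.
Proof.
  intros Hs Hd Hz HO HF x t HU. unfold dx.
  rewrite (Derive_ext_loc _ (fun y => evf phi zf e y t)).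
  apply is_derive_unique, (ev_isdx phi U zf zd); auto.
  generalize (loc_x U x t HO HU). apply filter_imp. intros y Hy. apply HF, Hy.
Qed.

Fixpoint noZ e : Prop := match e with V _ => True | Zv => False | C _ => True
  | Add a b => noZ a /\ noZ b | Mul a b => noZ a /\ noZ b end.
Lemma ev_noZ y z z' e : noZ e -> ev y z e = ev y z' e.
Proof. induction e; simpl; intuition; congruence. Qed.
Lemma derx_noZ zd e : noZ zd -> noZ e -> noZ (derx zd e).
Proof. intros Hz; induction e; simpl; intuition. Qed.
Lemma Q_noZ a n : noZ (Q a n).
Proof. induction n; simpl. tauto. split. tauto. apply derx_noZ; simpl; auto. Qed.

Lemma dt_dn phi a : smooth2 phi -> (forall x t, dx phi x t <> 0) ->
  (forall x t, dt phi x t / dx phi x t + a * schwarzian phi x t = 0) ->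
  forall n x t, dt (dn phi n) x t = dx phi x t * evf phi (fun _ _ => 0) (Q a n) x t.
Proof.
  intros Hs Hd Hk n. induction n; intros x t.
  - simpl. unfold evf, Yf; simpl.
    assert (E : dt phi x t = (dt phi x t / dx phi x t) * dx phi x t) by (field; apply Hd).
    rewrite E. replace (dt phi x t / dx phi x t) with (- (a * schwarzian phi x t)) by (generalize (Hk x t); lra).
    unfold schwarzian. field. apply Hd.
  - change (dn phi (S n)) with (dx (dn phi n)).
    rewrite mixed by (apply smooth_dn, Hs).
    unfold dx at 1.
    rewrite (Derive_ext _ (fun y => dx phi y t * evf phi (fun _ _ => 0) (Q a n) y t)) by (intros; apply IHn).
    apply is_derive_unique.
    eapply isd_eq. apply isd_mult. apply smooth_isdx, smooth_dx, Hs.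
    apply (ev_isdx phi (fun _ _ => True) (fun _ _ => 0) (C 0)); auto.
    intros; unfold evf; simpl; apply isd_const.
    change (evf phi (fun _ _ => 0) (Q a (S n)) x t) with
      (Yf phi 2 x t * evf phi (fun _ _ => 0) (Q a n) x t + evf phi (fun _ _ => 0) (derx (C 0) (Q a n)) x t).
    unfold Yf; simpl. field. apply Hd.
Qed.

Lemma dt_dn' phi a zf : smooth2 phi -> (forall x t, dx phi x t <> 0) ->
  (forall x t, dt phi x t / dx phi x t + a * schwarzian phi x t = 0) ->
  forall n x t, dt (dn phi n) x t = dx phi x t * evf phi zf (Q a n) x t.
Proof.
  intros Hs Hd Hk n x t. rewrite (dt_dn phi a Hs Hd Hk). unfold evf.
  rewrite (ev_noZ _ 0 (zf x t)) by apply Q_noZ. reflexivity.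
Qed.

Lemma Y_isdt phi a zf n x t : smooth2 phi -> (forall x t, dx phi x t <> 0) ->
  (forall x t, dt phi x t / dx phi x t + a * schwarzian phi x t = 0) ->
  is_derive (fun s => Yf phi n x s) t (evf phi zf (dvt a n) x t).
Proof.
  intros Hs Hd Hk. unfold Yf.
  eapply isd_eq. apply is_derive_div.
  apply smooth_isdt, smooth_dn, Hs. apply smooth_isdt, smooth_dn, Hs. apply Hd.
  rewrite (dt_dn' phi a zf Hs Hd Hk n), (dt_dn' phi a zf Hs Hd Hk 1).
  change (evf phi zf (dvt a n) x t) with
    (evf phi zf (Q a n) x t + -1 * (Yf phi n x t * evf phi zf (Q a 1) x t)).
  unfold Yf. simpl dn. field. apply Hd.
Qed.

Lemma ev_isdt phi a U zf zd e x t : smooth2 phi -> (forall x t, dx phi x t <> 0) ->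
  (forall x t, dt phi x t / dx phi x t + a * schwarzian phi x t = 0) ->
  (forall x t, U x t -> is_derive (fun s => zf x s) t (evf phi zf zd x t)) -> U x t ->
  is_derive (fun s => evf phi zf e x s) t (evf phi zf (der (dvt a) zd e) x t).
Proof.
  intros Hs Hd Hk Hz HU. induction e.
  - apply (Y_isdt phi a zf n x t Hs Hd Hk).
  - unfold evf in *; simpl. apply Hz, HU.
  - unfold evf; simpl. apply isd_const.
  - unfold evf in *; simpl. apply isd_plus; auto.
  - unfold evf in *; simpl. apply isd_mult; auto.
Qed.

Lemma dt_on phi a U zf zd F e : smooth2 phi -> (forall x t, dx phi x t <> 0) ->
  (forall x t, dt phi x t / dx phi x t + a * schwarzian phi x t = 0) ->
  (forall x t, U x t -> is_derive (fun s => zf x s) t (evf phi zf zd x t)) -> open2 U ->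
  (forall x t, U x t -> F x t = evf phi zf e x t) ->
  forall x t, U x t -> dt F x t = evf phi zf (der (dvt a) zd e) x t.
Proof.
  intros Hs Hd Hk Hz HO HF x t HU. unfold dt.
  rewrite (Derive_ext_loc _ (fun s => evf phi zf e x s)).
  apply is_derive_unique, (ev_isdt phi a U zf zd); auto.
  generalize (loc_t U x t HO HU). apply filter_imp. intros y Hy. apply HF, Hy.
Qed.

Lemma ln_abs_isd (g : R -> R) x dg : is_derive g x dg -> g x <> 0 ->
  is_derive (fun y => ln (Rabs (g y))) x (dg / g x).
Proof.
  intros Hg Hn. eapply isd_eq.
  apply (is_derive_comp ln (fun y => Rabs (g y))).
  apply is_derive_ln, Rabs_pos_lt, Hn. apply is_derive_Rabs; [exact Hg|exact Hn].
  unfold scal; simpl; unfold mult; simpl.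
  destruct (Rlt_dec (g x) 0) as [Hl|Hl].
  - rewrite sign_eq_m1 by exact Hl. rewrite Rabs_left by exact Hl. field. exact Hn.
  - assert (Hp : 0 < g x) by (destruct (Rtotal_order (g x) 0) as [?|[?|?]]; tauto || lra).
    rewrite sign_eq_1 by exact Hp. rewrite Rabs_right by lra. field. exact Hn.
Qed.

Lemma ev_zdt phi zf a x t : evf phi zf (zdt a) x t =
  zf x t * evf phi zf (Q a 1) x t + -1 * (zf x t * zf x t * evf phi zf (Q a 0) x t).
Proof. reflexivity. Qed.

Theorem mainTheorem8 (a : R) (phi : R -> R -> R) (A B : R) (U : R -> R -> Prop) :
  a <> 0 ->
  smooth2 phi ->
  (forall x t, dx phi x t <> 0) ->
  (forall x t, dt phi x t / dx phi x t + a * schwarzian phi x t = 0) ->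
  (A <> 0 \/ B <> 0) ->
  open2 U ->
  (forall x t, U x t -> A * phi x t + B <> 0) ->
  (forall x t, KdV_at a (fun y s => a * schwarzian phi y s) x t) /\
  (forall x t, U x t -> KdV_at a (utilde a A B phi) x t).
Proof.
  intros Ha Hs Hd Hk _ HO HU. split.
  - set (U0 := fun _ _ : R => True).
    set (z0 := fun _ _ : R => 0).
    assert (HO0 : open2 U0) by (intros x t _; exists 1; split; [lra|intros; exact I]).
    assert (Hzx : forall x t, U0 x t -> is_derive (fun y => z0 y t) x (evf phi z0 (C 0) x t))
      by (intros; unfold evf, z0; simpl; apply isd_const).
    assert (Hzt : forall x t, U0 x t -> is_derive (fun s => z0 x s) t (evf phi z0 (C 0) x t))
      by (intros; unfold evf, z0; simpl; apply isd_const).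
    set (u := fun y s => a * schwarzian phi y s).
    assert (Hu : forall x t, U0 x t -> u x t = evf phi z0 (eu a) x t).
    { intros x t _. unfold u, evf, Yf, schwarzian; simpl. field. apply Hd. }
    pose proof (dx_on phi U0 z0 (C 0) _ _ Hs Hd Hzx HO0 Hu) as H1.
    pose proof (dx_on phi U0 z0 (C 0) _ _ Hs Hd Hzx HO0 H1) as H2.
    pose proof (dx_on phi U0 z0 (C 0) _ _ Hs Hd Hzx HO0 H2) as H3.
    pose proof (dt_on phi a U0 z0 (C 0) _ _ Hs Hd Hk Hzt HO0 Hu) as Ht.
    intros x t. unfold KdV_at. fold u.
    rewrite (Ht x t I), (H3 x t I), (H1 x t I), (Hu x t I).
    exact (alg1 a (fun n => Yf phi n x t) (z0 x t)).
  - set (Zf := fun x t => A * dx phi x t / (A * phi x t + B)).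
    assert (Hzx : forall x t, U x t -> is_derive (fun y => Zf y t) x (evf phi Zf zdx x t)).
    { intros x t Hxt. unfold Zf. eapply isd_eq. apply is_derive_div.
      apply isd_mult. apply isd_const. apply smooth_isdx, smooth_dx, Hs.
      apply isd_plus. apply isd_mult. apply isd_const. apply smooth_isdx, Hs. apply isd_const.
      apply HU, Hxt.
      unfold evf, Yf; simpl. field. pose proof (HU x t Hxt); pose proof (Hd x t); tauto. }
    assert (Hzt : forall x t, U x t -> is_derive (fun s => Zf x s) t (evf phi Zf (zdt a) x t)).
    { intros x t Hxt. unfold Zf. eapply isd_eq. apply is_derive_div.
      apply isd_mult. apply isd_const. apply smooth_isdt, smooth_dx, Hs.
      apply isd_plus. apply isd_mult. apply isd_const. apply smooth_isdt, Hs. apply isd_const.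
      apply HU, Hxt.
      change (evf phi Zf (zdt a) x t) with
        (Zf x t * evf phi Zf (Q a 1) x t + -1 * (Zf x t * Zf x t * evf phi Zf (Q a 0) x t)).
      change (dt (dx phi) x t) with (dt (dn phi 1) x t).
      change (dt phi x t) with (dt (dn phi 0) x t).
      rewrite (dt_dn' phi a Zf Hs Hd Hk 1), (dt_dn' phi a Zf Hs Hd Hk 0).
      rewrite ev_zdt. unfold Zf; simpl dn. field. pose proof (HU x t Hxt); pose proof (Hd x t); tauto. }
    assert (HL : forall x t, U x t -> dx (logterm A B phi) x t = evf phi Zf eL x t).
    { intros x t Hxt. unfold dx. apply is_derive_unique.
      apply (is_derive_ext (fun y => ln (Rabs (A * phi y t + B)) + (- / 2) * ln (Rabs (dx phi y t)))).
      { intros y; unfold logterm, Rminus; rewrite Ropp_mult_distr_l; reflexivity. }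
      eapply isd_eq. apply isd_plus.
      apply ln_abs_isd. apply isd_plus. apply isd_mult. apply isd_const. apply smooth_isdx, Hs. apply isd_const.
      apply HU, Hxt.
      apply isd_mult. apply isd_const. apply ln_abs_isd. apply smooth_isdx, smooth_dx, Hs. apply Hd.
      unfold evf, Yf, Zf; simpl. field. pose proof (HU x t Hxt); pose proof (Hd x t); tauto. }
    pose proof (dx_on phi U Zf zdx _ _ Hs Hd Hzx HO HL) as HL2.
    assert (Hu : forall x t, U x t -> utilde a A B phi x t = evf phi Zf (eut a) x t).
    { intros x t Hxt. unfold utilde. rewrite (HL2 x t Hxt).
      change (evf phi Zf (eut a) x t) with
        (evf phi Zf (eu a) x t + 4 * a * evf phi Zf (derx zdx eL) x t).
      assert (E : a * schwarzian phi x t = evf phi Zf (eu a) x t).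
      { unfold evf, Yf, schwarzian; simpl. field. apply Hd. }
      rewrite E. reflexivity. }
    pose proof (dx_on phi U Zf zdx _ _ Hs Hd Hzx HO Hu) as H1.
    pose proof (dx_on phi U Zf zdx _ _ Hs Hd Hzx HO H1) as H2.
    pose proof (dx_on phi U Zf zdx _ _ Hs Hd Hzx HO H2) as H3.
    pose proof (dt_on phi a U Zf (zdt a) _ _ Hs Hd Hk Hzt HO Hu) as Ht.
    intros x t Hxt. unfold KdV_at.
    rewrite (Ht x t Hxt), (H3 x t Hxt), (H1 x t Hxt), (Hu x t Hxt).
    exact (alg2 a (fun n => Yf phi n x t) (Zf x t)).
Qed.
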